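(* Let $(\mathbb{I},\bullet,e)$ be a monoidal category, $\mathbb{C}$ a finitely complete category, and $(\mathsf{P},\mu^{\mathsf{P}},\eta^{\mathsf{P}})$ a parameterised monad with $\mathsf{P}:\mathbb{I}^{\mathsf{op}}\times\mathbb{I}\to[\mathbb{C},\mathbb{C}]$. Then there is a graded monad $\mathsf{G}$ on $\mathbb{C}$, graded by $\mathbb{I}$, given by the end $\mathsf{G}\,f=\int_{i}\mathsf{P}(i,i\bullet f)$, whose unit $\eta:\mathsf{Id}\to\mathsf{G}\,e$ is induced by $\eta^{\mathsf{P}}$ (components $\eta^{\mathsf{P}}_i:\mathsf{Id}\to\mathsf{P}(i,i\bullet e)$) and whose multiplication $\mathsf{G}\,f\,\mathsf{G}\,g\to\mathsf{G}(f\bullet g)$ is induced by $\mu^{\mathsf{P}}_{i,\,i\bullet f,\,(i\bullet f)\bullet g}:\mathsf{P}(i,i\bullet f)\,\mathsf{P}(i\bullet f,(i\bullet f)\bullet g)\to\mathsf{P}(i,(i\bullet f)\bullet g)$.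
   Context: A parameterised monad indexed by $\mathbb{I}$ is a functor $\mathsf{P}:\mathbb{I}^{\mathsf{op}}\times\mathbb{I}\to[\mathbb{C},\mathbb{C}]$ with natural transformations $\eta^{\mathsf{P}}_I:\mathsf{Id}\to\mathsf{P}(I,I)$ (dinatural in $I$) and $\mu^{\mathsf{P}}_{I,J,K}:\mathsf{P}(I,J)\mathsf{P}(J,K)\to\mathsf{P}(I,K)$ (natural in $I,K$, dinatural in $J$) satisfying $\mu^{\mathsf{P}}_{I,I,J}\circ\eta^{\mathsf{P}}_I\mathsf{P}(I,J)=\mathrm{id}=\mu^{\mathsf{P}}_{I,J,J}\circ\mathsf{P}(I,J)\eta^{\mathsf{P}}_J$ and $\mu^{\mathsf{P}}_{I,K,L}\circ\mu^{\mathsf{P}}_{I,J,K}\mathsf{P}(K,L)=\mu^{\mathsf{P}}_{I,J,L}\circ\mathsf{P}(I,J)\mu^{\mathsf{P}}_{J,K,L}$. A graded monad graded by the monoidal category $(\mathbb{I},\bullet,e)$ is a lax monoidal functor $\mathsf{G}:(\mathbb{I},\bullet,e)\to([\mathbb{C},\mathbb{C}],\circ,\mathsf{Id})$, i.e. a functor with natural transformations $\eta:\mathsf{Id}\to\mathsf{G}\,e$ and $\mu_{f,g}:\mathsf{G}\,f\,\mathsf{G}\,g\to\mathsf{G}(f\bullet g)$ (natural in $f,g$) satisfying unit and associativity laws. $\int_i$ denotes an end in $[\mathbb{C},\mathbb{C}]$ computed pointwise in $\mathbb{C}$.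
   Formalization: For every f and every object X of $\mathbb{C}$, the end $\int_{i}\mathsf{P}(i,i\bullet f)$ taken pointwise at X is assumed to exist, on top of $\mathbb{C}$ being finitely complete. The statement above fails without it. *)

(* Defs.v *)
Set Implicit Arguments.
Unset Strict Implicit.

Record Cat : Type := {
  ob :> Type;
  hom : ob -> ob -> Type;
  idm : forall a, hom a a;
  cmp : forall a b c, hom b c -> hom a b -> hom a c;
  cmp_id_l : forall a b (f : hom a b), cmp (idm b) f = f;
  cmp_id_r : forall a b (f : hom a b), cmp f (idm a) = f;
  cmp_assoc : forall a b c d (f : hom a b) (g : hom b c) (h : hom c d),
      cmp h (cmp g f) = cmp (cmp h g) f
}.
Arguments hom {_} _ _.
Arguments idm {_} _.
Arguments cmp {_ _ _ _} g f.
Notation "g ∘ f" := (cmp g f) (at level 40, left associativity).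

Record Functor (C D : Cat) : Type := {
  fobj :> C -> D;
  fmap : forall a b : C, hom a b -> hom (fobj a) (fobj b);
  fmap_id : forall a, fmap (idm a) = idm (fobj a);
  fmap_cmp : forall a b c (f : hom a b) (g : hom b c),
      fmap (g ∘ f) = fmap g ∘ fmap f
}.
Arguments fmap {_ _} _ {_ _} _.

Record NatTrans (C D : Cat) (F G : Functor C D) : Type := {
  cmpt :> forall a : C, hom (F a) (G a);
  naturality : forall (a b : C) (h : hom a b),
      cmpt b ∘ fmap F h = fmap G h ∘ cmpt a
}.

Definition IdF (C : Cat) : Functor C C.
Proof.
  refine {| fobj := fun X => X; fmap := fun a b h => h |}; reflexivity.
Defined.

Definition FComp (C : Cat) (F G : Functor C C) : Functor C C.
Proof.
  refine {| fobj := fun X => F (G X);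
            fmap := fun a b h => fmap F (fmap G h) |}.
  - intro a; rewrite !fmap_id; reflexivity.
  - intros; rewrite !fmap_cmp; reflexivity.
Defined.

Definition hcomp (C : Cat) (F F' G G' : Functor C C)
  (alpha : NatTrans F F') (beta : NatTrans G G') (X : C)
  : hom (F (G X)) (F' (G' X)) :=
  alpha (G' X) ∘ fmap F (beta X).

Definition is_terminal (C : Cat) (t : C) : Prop :=
  forall x : C, exists h : hom x t, forall h' : hom x t, h' = h.

Definition has_pullbacks (C : Cat) : Prop :=
  forall (a b c : C) (f : hom a c) (g : hom b c),
  exists (p : C) (p1 : hom p a) (p2 : hom p b),
    f ∘ p1 = g ∘ p2 /\
    forall (q : C) (q1 : hom q a) (q2 : hom q b), f ∘ q1 = g ∘ q2 ->
      exists u : hom q p, p1 ∘ u = q1 /\ p2 ∘ u = q2 /\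
        forall u' : hom q p, p1 ∘ u' = q1 -> p2 ∘ u' = q2 -> u' = u.

Definition finitely_complete (C : Cat) : Prop :=
  (exists t : C, is_terminal t) /\ has_pullbacks C.

Record Monoidal (I : Cat) : Type := {
  tens : I -> I -> I;
  tensm : forall a a' b b' : I, hom a a' -> hom b b' -> hom (tens a b) (tens a' b');
  tensm_id : forall a b, tensm (idm a) (idm b) = idm (tens a b);
  tensm_cmp : forall a a' a'' b b' b'' (u : hom a a') (u' : hom a' a'')
      (v : hom b b') (v' : hom b' b''),
      tensm (u' ∘ u) (v' ∘ v) = tensm u' v' ∘ tensm u v;
  munit : I;
  assoc : forall a b c, hom (tens (tens a b) c) (tens a (tens b c));
  assoc_inv : forall a b c, hom (tens a (tens b c)) (tens (tens a b) c);
  assoc_iso1 : forall a b c, assoc_inv a b c ∘ assoc a b c = idm _;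
  assoc_iso2 : forall a b c, assoc a b c ∘ assoc_inv a b c = idm _;
  assoc_nat : forall a a' b b' c c' (u : hom a a') (v : hom b b') (w : hom c c'),
      assoc a' b' c' ∘ tensm (tensm u v) w = tensm u (tensm v w) ∘ assoc a b c;
  lunit : forall a, hom (tens munit a) a;
  lunit_inv : forall a, hom a (tens munit a);
  lunit_iso1 : forall a, lunit_inv a ∘ lunit a = idm _;
  lunit_iso2 : forall a, lunit a ∘ lunit_inv a = idm _;
  lunit_nat : forall a a' (u : hom a a'), lunit a' ∘ tensm (idm munit) u = u ∘ lunit a;
  runit : forall a, hom (tens a munit) a;
  runit_inv : forall a, hom a (tens a munit);
  runit_iso1 : forall a, runit_inv a ∘ runit a = idm _;
  runit_iso2 : forall a, runit a ∘ runit_inv a = idm _;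
  runit_nat : forall a a' (u : hom a a'), runit a' ∘ tensm u (idm munit) = u ∘ runit a;
  pentagon : forall a b c d,
      assoc a b (tens c d) ∘ assoc (tens a b) c d
      = tensm (idm a) (assoc b c d) ∘ assoc a (tens b c) d ∘ tensm (assoc a b c) (idm d);
  triangle : forall a b,
      tensm (idm a) (lunit b) ∘ assoc a munit b = tensm (runit a) (idm b)
}.
Arguments tensm {I} m {a a' b b'} u v.
Arguments munit {I} m.

Record ParamMonad (I C : Cat) : Type := {
  P : I -> I -> Functor C C;
  Pmap : forall (i i' j j' : I), hom i' i -> hom j j' -> NatTrans (P i j) (P i' j');
  Pmap_id : forall i j X, Pmap (idm i) (idm j) X = idm _;
  Pmap_cmp : forall i i' i'' j j' j'' (u : hom i' i) (u' : hom i'' i')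
      (v : hom j j') (v' : hom j' j'') X,
      Pmap (u ∘ u') (v' ∘ v) X = Pmap u' v' X ∘ Pmap u v X;
  etaP : forall i, NatTrans (IdF C) (P i i);
  etaP_dinat : forall i j (u : hom i j) X,
      Pmap u (idm j) X ∘ etaP j X = Pmap (idm i) u X ∘ etaP i X;
  muP : forall i j k, NatTrans (FComp (P i j) (P j k)) (P i k);
  muP_nat : forall i i' j k k' (u : hom i' i) (w : hom k k') X,
      muP i' j k' X ∘ hcomp (Pmap u (idm j)) (Pmap (idm j) w) X
      = Pmap u w X ∘ muP i j k X;
  muP_dinat : forall i j j' k (v : hom j j') X,
      muP i j k X ∘ fmap (P i j) (Pmap v (idm k) X)
      = muP i j' k X ∘ Pmap (idm i) v (P j' k X);
  muP_unit_l : forall i j X, muP i i j X ∘ etaP i (P i j X) = idm _;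
  muP_unit_r : forall i j X, muP i j j X ∘ fmap (P i j) (etaP j X) = idm _;
  muP_assoc : forall i j k l X,
      muP i k l X ∘ muP i j k (P k l X) = muP i j l X ∘ fmap (P i j) (muP j k l X)
}.
Arguments Pmap {I C} p {i i' j j'} u v.

(* ---------- Graded monads = lax monoidal functors (I,.,e) -> ([C,C],o,Id) ---------- *)
Record GradedMonad (I : Cat) (M : Monoidal I) (C : Cat) : Type := {
  G : I -> Functor C C;
  Gmap : forall f f' : I, hom f f' -> NatTrans (G f) (G f');
  Gmap_id : forall f X, Gmap (idm f) X = idm _;
  Gmap_cmp : forall f f' f'' (u : hom f f') (u' : hom f' f'') X,
      Gmap (u' ∘ u) X = Gmap u' X ∘ Gmap u X;
  geta : NatTrans (IdF C) (G (munit M));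
  gmu : forall f g, NatTrans (FComp (G f) (G g)) (G (tens M f g));
  gmu_nat : forall f f' g g' (u : hom f f') (v : hom g g') X,
      gmu f' g' X ∘ hcomp (Gmap u) (Gmap v) X = Gmap (tensm M u v) X ∘ gmu f g X;
  gunit_l : forall f X,
      Gmap (lunit M f) X ∘ gmu (munit M) f X ∘ geta (G f X) = idm _;
  gunit_r : forall f X,
      Gmap (runit M f) X ∘ gmu f (munit M) X ∘ fmap (G f) (geta X) = idm _;
  gassoc : forall f g h X,
      Gmap (assoc M f g h) X ∘ gmu (tens M f g) h X ∘ gmu f g (G h X)
      = gmu f (tens M g h) X ∘ fmap (G f) (gmu g h X)
}.
Arguments Gmap {_ _ _} _ {_ _} _.

(* Raw data of a functor H : I^op x I -> C *)
Definition is_wedge (I C : Cat) (Hob : I -> I -> C)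
  (Hmap : forall i i' j j' : I, hom i' i -> hom j j' -> hom (Hob i j) (Hob i' j'))
  (W : C) (pi : forall i, hom W (Hob i i)) : Prop :=
  forall (i j : I) (u : hom i j), Hmap i i i j (idm i) u ∘ pi i = Hmap j i j j u (idm j) ∘ pi j.

Arguments is_wedge {_ _ _} _ _ _.

Definition is_end (I C : Cat) (Hob : I -> I -> C)
  (Hmap : forall i i' j j' : I, hom i' i -> hom j j' -> hom (Hob i j) (Hob i' j'))
  (W : C) (pi : forall i, hom W (Hob i i)) : Prop :=
  is_wedge Hmap W pi /\
  forall (W' : C) (pi' : forall i, hom W' (Hob i i)), is_wedge Hmap W' pi' ->
    exists h : hom W' W, (forall i, pi i ∘ h = pi' i) /\
      forall h' : hom W' W, (forall i, pi i ∘ h' = pi' i) -> h' = h.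

(* The integrand of  G f = \int_i P(i, i . f), evaluated pointwise at X :
   (i, j) |-> P(i, j . f) X *)
Definition integrand_ob (I C : Cat) (M : Monoidal I) (PM : ParamMonad I C)
  (f : I) (X : C) (i j : I) : C := P PM i (tens M j f) X.

Definition integrand_map (I C : Cat) (M : Monoidal I) (PM : ParamMonad I C)
  (f : I) (X : C) (i i' j j' : I) (u : hom i' i) (v : hom j j')
  : hom (integrand_ob M PM f X i j) (integrand_ob M PM f X i' j') :=
  Pmap PM u (tensm M v (idm f)) X.
Arguments is_end {_ _ _} _ _ _.

(* Main.v *)
Require Import Defs.
From Stdlib Require Import Setoid ClassicalEpsilon.

Lemma post_eq (C : Cat) (b c : C) (L R : hom b c) (e : L = R) (Z : C) (k : hom Z b) :
  L ∘ k = R ∘ k.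
Proof. rewrite e; reflexivity. Qed.
Arguments post_eq {C b c L R} e Z k.

Ltac normg := repeat rewrite <- cmp_assoc.
Ltac rwr E :=
  let H := fresh "H" in
  pose proof E as H; repeat rewrite <- cmp_assoc in H;
  first [ rewrite H; clear H
        | let H2 := fresh "H" in pose proof (post_eq H) as H2; clear H;
          repeat setoid_rewrite <- cmp_assoc in H2; rewrite H2; clear H2 ];
  normg.

Record EndData (I C : Cat) (M : Monoidal I) (PM : ParamMonad I C) : Type := mkED {
  Eob : I -> C -> C;
  Epi : forall f X i, hom (Eob f X) (P PM i (tens M i f) X);
  Eend : forall f X, is_end (integrand_map M PM f X) (Eob f X) (Epi f X) }.
Arguments EndData {I C} M PM.
Arguments Eob {I C M PM} e f X.
Arguments Epi {I C M PM} e f X i.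
Arguments Eend {I C M PM} e f X.

Definition get_ED (I C : Cat) (M : Monoidal I) (PM : ParamMonad I C)
  (Hends : forall (f : I) (X : C),
      exists (W : C) (pi : forall i, hom W (integrand_ob M PM f X i i)),
        is_end (integrand_map M PM f X) W pi) : EndData M PM :=
  let w := fun f X => constructive_indefinite_description _ (Hends f X) in
  @mkED I C M PM (fun f X => proj1_sig (w f X))
    (fun f X => proj1_sig (constructive_indefinite_description _ (proj2_sig (w f X))))
    (fun f X => proj2_sig (constructive_indefinite_description _ (proj2_sig (w f X)))).

Definition elift {I C : Cat} {M : Monoidal I} {PM : ParamMonad I C} (E : EndData M PM)
  (f : I) (X : C) (W' : C) (pi' : forall i, hom W' (P PM i (tens M i f) X))
  (Hw : is_wedge (integrand_map M PM f X) W' pi') : hom W' (Eob E f X) :=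
  proj1_sig (constructive_indefinite_description _ (proj2 (Eend E f X) W' pi' Hw)).

Lemma elift_spec {I C : Cat} {M : Monoidal I} {PM : ParamMonad I C} (E : EndData M PM)
  f X W' pi' Hw i : Epi E f X i ∘ @elift I C M PM E f X W' pi' Hw = pi' i.
Proof.
  unfold elift. exact (proj1 (proj2_sig (constructive_indefinite_description _ (proj2 (Eend E f X) W' pi' Hw))) i).
Qed.

Lemma eext {I C : Cat} {M : Monoidal I} {PM : ParamMonad I C} (E : EndData M PM)
  f X W' (h1 h2 : hom W' (Eob E f X)) :
  (forall i, Epi E f X i ∘ h1 = Epi E f X i ∘ h2) -> h1 = h2.
Proof.
  intro Heq. destruct (Eend E f X) as [Hw Hu].
  assert (Hw' : is_wedge (integrand_map M PM f X) W' (fun i => Epi E f X i ∘ h1)).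
  { intros i j u. cbv beta. rewrite !cmp_assoc. exact (f_equal (fun t => t ∘ h1) (Hw i j u)). }
  destruct (Hu W' _ Hw') as [h [_ Huniq]].
  rewrite (Huniq h1) by (intros; reflexivity).
  rewrite (Huniq h2) by (intros; symmetry; apply Heq). reflexivity.
Qed.

Lemma Epi_wedge {I C : Cat} {M : Monoidal I} {PM : ParamMonad I C} (E : EndData M PM)
  f X i j (u : hom i j) :
  Pmap PM (idm i) (tensm M u (idm f)) X ∘ Epi E f X i
  = Pmap PM u (idm (tens M j f)) X ∘ Epi E f X j.
Proof. pose proof (proj1 (Eend E f X) i j u) as e. unfold integrand_map in e. rewrite tensm_id in e. exact e. Qed.

Lemma Pnat {I C : Cat} (PM : ParamMonad I C) i i' j j' (u : hom i' i) (v : hom j j')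
  X Y (h : hom X Y) :
  Pmap PM u v Y ∘ fmap (P PM i j) h = fmap (P PM i' j') h ∘ Pmap PM u v X.
Proof. exact (naturality (Pmap PM u v) h). Qed.

Lemma GF_wedge {I C : Cat} {M : Monoidal I} {PM : ParamMonad I C} (E : EndData M PM)
  f X Y (h : hom X Y) :
  is_wedge (integrand_map M PM f Y) (Eob E f X)
    (fun i => fmap (P PM i (tens M i f)) h ∘ Epi E f X i).
Proof.
  intros i j u. unfold integrand_map. cbv beta. rewrite tensm_id. normg.
  rwr (Pnat PM _ _ _ _ (idm i) (tensm M u (idm f)) X Y h).
  rwr (Epi_wedge E f X i j u).
  rwr (eq_sym (Pnat PM _ _ _ _ u (idm (tens M j f)) X Y h)).
  reflexivity.
Qed.

Lemma post22 {C : Cat} {a b b' c : C} (p : hom b c) (q : hom a b) (r : hom b' c) (s : hom a b')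
  (e : p ∘ q = r ∘ s) {Z : C} (k : hom Z a) : p ∘ (q ∘ k) = r ∘ (s ∘ k).
Proof. rewrite !cmp_assoc, e; reflexivity. Qed.
Lemma post21 {C : Cat} {a b c : C} (p : hom b c) (q : hom a b) (r : hom a c)
  (e : p ∘ q = r) {Z : C} (k : hom Z a) : p ∘ (q ∘ k) = r ∘ k.
Proof. rewrite cmp_assoc, e; reflexivity. Qed.
Arguments post22 {C a b b' c p q r s} e {Z} k.
Arguments post21 {C a b c p q r} e {Z} k.

Ltac cbnG := cbn [fobj fmap cmpt IdF FComp].
Ltac r22 E := let H := fresh "H" in pose proof E as H; cbnG; cbn [fobj fmap cmpt IdF FComp] in H;
  first [rewrite (post22 H) | rewrite H]; clear H; normg.
Ltac r21 E := let H := fresh "H" in pose proof E as H; cbnG; cbn [fobj fmap cmpt IdF FComp] in H;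
  first [rewrite (post21 H) | rewrite H]; clear H; normg.
Ltac r12 E := let H := fresh "H" in pose proof E as H; cbnG; cbn [fobj fmap cmpt IdF FComp] in H;
  first [rewrite <- (post21 H) | rewrite <- H]; clear H; normg.

Lemma Pmap_vv {I C : Cat} (PM : ParamMonad I C) i j j' j'' (v : hom j j') (v' : hom j' j'') X :
  Pmap PM (idm i) v' X ∘ Pmap PM (idm i) v X = Pmap PM (idm i) (v' ∘ v) X.
Proof. rewrite <- Pmap_cmp, cmp_id_l. reflexivity. Qed.
Lemma Pmap_uu {I C : Cat} (PM : ParamMonad I C) i i' i'' j (u : hom i' i) (u' : hom i'' i') X :
  Pmap PM u' (idm j) X ∘ Pmap PM u (idm j) X = Pmap PM (u ∘ u') (idm j) X.
Proof. rewrite <- Pmap_cmp, cmp_id_l. reflexivity. Qed.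
Lemma Pmap_comm {I C : Cat} (PM : ParamMonad I C) i i' j j' (u : hom i' i) (v : hom j j') X :
  Pmap PM (idm i') v X ∘ Pmap PM u (idm j) X = Pmap PM u (idm j') X ∘ Pmap PM (idm i) v X.
Proof.
  rewrite <- !Pmap_cmp. rewrite cmp_id_l, cmp_id_r, cmp_id_l, cmp_id_r. reflexivity.
Qed.
Lemma Pmap_II {I C : Cat} (PM : ParamMonad I C) i j X :
  Pmap PM (idm i) (idm j) X = idm _.
Proof. apply Pmap_id. Qed.

Lemma muP_natr {I C : Cat} (PM : ParamMonad I C) i j k k' (w : hom k k') X :
  muP PM i j k' X ∘ fmap (P PM i j) (Pmap PM (idm j) w X) = Pmap PM (idm i) w X ∘ muP PM i j k X.
Proof.
  rewrite <- muP_nat. unfold hcomp. rewrite Pmap_II, cmp_id_l. reflexivity.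
Qed.
Lemma muP_natl {I C : Cat} (PM : ParamMonad I C) i i' j k (u : hom i' i) X :
  muP PM i' j k X ∘ Pmap PM u (idm j) (P PM j k X) = Pmap PM u (idm k) X ∘ muP PM i j k X.
Proof.
  rewrite <- muP_nat. unfold hcomp. rewrite Pmap_II, fmap_id, cmp_id_r. reflexivity.
Qed.
Lemma muP_natX {I C : Cat} (PM : ParamMonad I C) i j k X Y (h : hom X Y) :
  muP PM i j k Y ∘ fmap (P PM i j) (fmap (P PM j k) h) = fmap (P PM i k) h ∘ muP PM i j k X.
Proof. exact (naturality (muP PM i j k) h). Qed.
Lemma etaP_natX {I C : Cat} (PM : ParamMonad I C) i X Y (h : hom X Y) :
  etaP PM i Y ∘ h = fmap (P PM i i) h ∘ etaP PM i X.
Proof. exact (naturality (etaP PM i) h). Qed.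
Lemma fmapC {C : Cat} (F : Functor C C) a b c (f : hom a b) (g : hom b c) :
  fmap F g ∘ fmap F f = fmap F (g ∘ f).
Proof. rewrite fmap_cmp. reflexivity. Qed.

Lemma tens_interchange {I : Cat} (M : Monoidal I) a a' b b' (w : hom a a') (u : hom b b') :
  tensm M w (idm b') ∘ tensm M (idm a) u = tensm M (idm a') u ∘ tensm M w (idm b).
Proof. rewrite <- !tensm_cmp, !cmp_id_l, !cmp_id_r. reflexivity. Qed.
Lemma runit_inv_nat {I : Cat} (M : Monoidal I) i j (w : hom i j) :
  tensm M w (idm (munit M)) ∘ runit_inv M i = runit_inv M j ∘ w.
Proof.
  rewrite <- (cmp_id_l (tensm M w (idm (munit M)))).
  rewrite <- (runit_iso1 M j). normg. r22 (runit_nat M w).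
  r21 (runit_iso2 M i). rewrite cmp_id_r. reflexivity.
Qed.
Lemma assoc_nat1 {I : Cat} (M : Monoidal I) i j f g (w : hom i j) :
  tensm M w (idm (tens M f g)) ∘ assoc M i f g = assoc M j f g ∘ tensm M (tensm M w (idm f)) (idm g).
Proof. rewrite (assoc_nat M), tensm_id. reflexivity. Qed.
Lemma assoc_nat2 {I : Cat} (M : Monoidal I) i f f' g g' (u : hom f f') (v : hom g g') :
  tensm M (idm i) (tensm M u v) ∘ assoc M i f g = assoc M i f' g' ∘ tensm M (tensm M (idm i) u) v.
Proof. rewrite (assoc_nat M). reflexivity. Qed.

Definition GFmap {I C : Cat} {M : Monoidal I} {PM : ParamMonad I C} (E : EndData M PM)
  f X Y (h : hom X Y) : hom (Eob E f X) (Eob E f Y) :=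
  elift E f Y (Eob E f X) (fun i => fmap (P PM i (tens M i f)) h ∘ Epi E f X i) (GF_wedge E f X Y h).

Lemma GFmap_spec {I C : Cat} {M : Monoidal I} {PM : ParamMonad I C} (E : EndData M PM)
  f X Y (h : hom X Y) i :
  Epi E f Y i ∘ GFmap E f X Y h = fmap (P PM i (tens M i f)) h ∘ Epi E f X i.
Proof. exact (elift_spec E f Y (Eob E f X) _ (GF_wedge E f X Y h) i). Qed.

Definition GF {I C : Cat} {M : Monoidal I} {PM : ParamMonad I C} (E : EndData M PM) (f : I)
  : Functor C C.
Proof.
  refine {| fobj := Eob E f; fmap := GFmap E f |}.
  - intro a. apply eext. intro i. rewrite GFmap_spec, fmap_id, cmp_id_l, cmp_id_r. reflexivity.
  - intros a b c h1 h2. apply eext. intro i.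
    r22 (GFmap_spec E f a c (h2 ∘ h1) i).
    r22 (GFmap_spec E f b c h2 i). r22 (GFmap_spec E f a b h1 i).
    rewrite fmap_cmp. normg. reflexivity.
Defined.

Lemma GF_spec {I C : Cat} {M : Monoidal I} {PM : ParamMonad I C} (E : EndData M PM)
  f X Y (h : hom X Y) i :
  Epi E f Y i ∘ fmap (GF E f) h = fmap (P PM i (tens M i f)) h ∘ Epi E f X i.
Proof. exact (GFmap_spec E f X Y h i). Qed.

Lemma Gm_wedge {I C : Cat} {M : Monoidal I} {PM : ParamMonad I C} (E : EndData M PM)
  f f' (u : hom f f') X :
  is_wedge (integrand_map M PM f' X) (Eob E f X)
    (fun i => Pmap PM (idm i) (tensm M (idm i) u) X ∘ Epi E f X i).
Proof.
  intros i j w. unfold integrand_map. cbv beta. rewrite tensm_id. normg.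
  r21 (Pmap_vv PM i _ _ _ (tensm M (idm i) u) (tensm M w (idm f')) X).
  rewrite tens_interchange.
  r12 (Pmap_vv PM i _ _ _ (tensm M w (idm f)) (tensm M (idm j) u) X).
  r22 (Epi_wedge E f X i j w).
  r22 (Pmap_comm PM j i _ _ w (tensm M (idm j) u) X).
  reflexivity.
Qed.

Definition GmC {I C : Cat} {M : Monoidal I} {PM : ParamMonad I C} (E : EndData M PM)
  f f' (u : hom f f') X : hom (Eob E f X) (Eob E f' X) :=
  elift E f' X (Eob E f X) (fun i => Pmap PM (idm i) (tensm M (idm i) u) X ∘ Epi E f X i)
    (Gm_wedge E f f' u X).

Lemma GmC_spec {I C : Cat} {M : Monoidal I} {PM : ParamMonad I C} (E : EndData M PM)
  f f' (u : hom f f') X i :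
  Epi E f' X i ∘ GmC E f f' u X = Pmap PM (idm i) (tensm M (idm i) u) X ∘ Epi E f X i.
Proof. exact (elift_spec E f' X (Eob E f X) _ (Gm_wedge E f f' u X) i). Qed.

Definition Gm {I C : Cat} {M : Monoidal I} {PM : ParamMonad I C} (E : EndData M PM)
  f f' (u : hom f f') : NatTrans (GF E f) (GF E f').
Proof.
  refine (@Build_NatTrans C C (GF E f) (GF E f') (GmC E f f' u) _).
  intros a b h. apply eext. intro i. cbn [fobj fmap GF FComp IdF cmpt].
  r22 (GmC_spec E f f' u b i). r22 (GFmap_spec E f a b h i).
  r22 (GFmap_spec E f' a b h i). r22 (GmC_spec E f f' u a i).
  r22 (Pnat PM i i _ _ (idm i) (tensm M (idm i) u) a b h). reflexivity.
Defined.

Lemma Gm_spec {I C : Cat} {M : Monoidal I} {PM : ParamMonad I C} (E : EndData M PM)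
  f f' (u : hom f f') X i :
  Epi E f' X i ∘ Gm E f f' u X = Pmap PM (idm i) (tensm M (idm i) u) X ∘ Epi E f X i.
Proof. exact (GmC_spec E f f' u X i). Qed.

Lemma Ge_wedge {I C : Cat} {M : Monoidal I} {PM : ParamMonad I C} (E : EndData M PM) X :
  is_wedge (integrand_map M PM (munit M) X) X
    (fun i => Pmap PM (idm i) (runit_inv M i) X ∘ etaP PM i X).
Proof.
  intros i j w. unfold integrand_map. cbv beta. rewrite tensm_id. normg.
  r21 (Pmap_vv PM i _ _ _ (runit_inv M i) (tensm M w (idm (munit M))) X).
  rewrite runit_inv_nat.
  r12 (Pmap_vv PM i _ _ _ w (runit_inv M j) X).
  r22 (eq_sym (etaP_dinat PM w X)).
  r22 (Pmap_comm PM j i _ _ w (runit_inv M j) X).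
  reflexivity.
Qed.

Definition GeC {I C : Cat} {M : Monoidal I} {PM : ParamMonad I C} (E : EndData M PM) X
  : hom X (Eob E (munit M) X) :=
  elift E (munit M) X X (fun i => Pmap PM (idm i) (runit_inv M i) X ∘ etaP PM i X) (Ge_wedge E X).

Lemma GeC_spec {I C : Cat} {M : Monoidal I} {PM : ParamMonad I C} (E : EndData M PM) X i :
  Epi E (munit M) X i ∘ GeC E X = Pmap PM (idm i) (runit_inv M i) X ∘ etaP PM i X.
Proof. exact (elift_spec E (munit M) X X _ (Ge_wedge E X) i). Qed.

Definition Ge {I C : Cat} {M : Monoidal I} {PM : ParamMonad I C} (E : EndData M PM)
  : NatTrans (IdF C) (GF E (munit M)).
Proof.
  refine (@Build_NatTrans C C (IdF C) (GF E (munit M)) (GeC E) _).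
  intros a b h. apply eext. intro i. cbn [fobj fmap GF FComp IdF cmpt].
  r22 (GeC_spec E b i). r22 (GFmap_spec E (munit M) a b h i). r22 (GeC_spec E a i).
  r22 (etaP_natX PM i a b h).
  r22 (Pnat PM i i _ _ (idm i) (runit_inv M i) a b h). reflexivity.
Defined.

Lemma Ge_spec {I C : Cat} {M : Monoidal I} {PM : ParamMonad I C} (E : EndData M PM) X i :
  Epi E (munit M) X i ∘ Ge E X = Pmap PM (idm i) (runit_inv M i) X ∘ etaP PM i X.
Proof. exact (GeC_spec E X i). Qed.

Definition gmu_fam {I C : Cat} {M : Monoidal I} {PM : ParamMonad I C} (E : EndData M PM)
  f g X i : hom (Eob E f (Eob E g X)) (P PM i (tens M i (tens M f g)) X) :=
  Pmap PM (idm i) (assoc M i f g) X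
  ∘ muP PM i (tens M i f) (tens M (tens M i f) g) X
  ∘ fmap (P PM i (tens M i f)) (Epi E g X (tens M i f))
  ∘ Epi E f (Eob E g X) i.

Lemma Gu_wedge {I C : Cat} {M : Monoidal I} {PM : ParamMonad I C} (E : EndData M PM) f g X :
  is_wedge (integrand_map M PM (tens M f g) X) (Eob E f (Eob E g X)) (gmu_fam E f g X).
Proof.
  intros i j w. unfold integrand_map, gmu_fam. rewrite tensm_id. normg.
  r21 (Pmap_vv PM i _ _ _ (assoc M i f g) (tensm M w (idm (tens M f g))) X).
  rewrite assoc_nat1.
  r12 (Pmap_vv PM i _ _ _ (tensm M (tensm M w (idm f)) (idm g)) (assoc M j f g) X).
  r22 (eq_sym (muP_natr PM i (tens M i f) _ _ (tensm M (tensm M w (idm f)) (idm g)) X)).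
  r21 (fmapC (P PM i (tens M i f)) _ _ _ (Epi E g X (tens M i f))
          (Pmap PM (idm (tens M i f)) (tensm M (tensm M w (idm f)) (idm g)) X)).
  rewrite (Epi_wedge E g X (tens M i f) (tens M j f) (tensm M w (idm f))).
  r12 (fmapC (P PM i (tens M i f)) _ _ _ (Epi E g X (tens M j f))
          (Pmap PM (tensm M w (idm f)) (idm (tens M (tens M j f) g)) X)).
  r22 (muP_dinat PM i (tens M (tens M j f) g) (tensm M w (idm f)) X).
  r22 (Pnat PM i i (tens M i f) (tens M j f) (idm i) (tensm M w (idm f)) (Eob E g X) _
         (Epi E g X (tens M j f))).
  r22 (Epi_wedge E f (Eob E g X) i j w).
  r22 (eq_sym (Pnat PM j i (tens M j f) (tens M j f) w (idm _) (Eob E g X) _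
         (Epi E g X (tens M j f)))).
  r22 (muP_natl PM j i (tens M j f) (tens M (tens M j f) g) w X).
  r22 (Pmap_comm PM j i _ _ w (assoc M j f g) X).
  reflexivity.
Qed.

Lemma GuC_spec0 {I C : Cat} {M : Monoidal I} {PM : ParamMonad I C} (E : EndData M PM) f g X i :
  Epi E (tens M f g) X i ∘ elift E (tens M f g) X (Eob E f (Eob E g X)) (gmu_fam E f g X) (Gu_wedge E f g X)
  = gmu_fam E f g X i.
Proof. exact (elift_spec E (tens M f g) X _ _ (Gu_wedge E f g X) i). Qed.

Definition GuC {I C : Cat} {M : Monoidal I} {PM : ParamMonad I C} (E : EndData M PM) f g X
  : hom (Eob E f (Eob E g X)) (Eob E (tens M f g) X) :=
  elift E (tens M f g) X (Eob E f (Eob E g X)) (gmu_fam E f g X) (Gu_wedge E f g X).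

Lemma GuC_spec {I C : Cat} {M : Monoidal I} {PM : ParamMonad I C} (E : EndData M PM) f g X i :
  Epi E (tens M f g) X i ∘ GuC E f g X =
  Pmap PM (idm i) (assoc M i f g) X
  ∘ muP PM i (tens M i f) (tens M (tens M i f) g) X
  ∘ fmap (P PM i (tens M i f)) (Epi E g X (tens M i f))
  ∘ Epi E f (Eob E g X) i.
Proof. exact (GuC_spec0 E f g X i). Qed.

Definition Gu {I C : Cat} {M : Monoidal I} {PM : ParamMonad I C} (E : EndData M PM) f g
  : NatTrans (FComp (GF E f) (GF E g)) (GF E (tens M f g)).
Proof.
  refine (@Build_NatTrans C C (FComp (GF E f) (GF E g)) (GF E (tens M f g)) (GuC E f g) _).
  intros a b h. apply eext. intro i. cbn [fobj fmap GF FComp IdF cmpt].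
  r22 (GuC_spec E f g b i).
  r22 (GFmap_spec E f (Eob E g a) (Eob E g b) (GFmap E g a b h) i).
  r21 (fmapC (P PM i (tens M i f)) _ _ _ (GFmap E g a b h) (Epi E g b (tens M i f))).
  rewrite (GFmap_spec E g a b h (tens M i f)).
  rewrite (fmap_cmp (P PM i (tens M i f))). normg.
  r22 (muP_natX PM i (tens M i f) (tens M (tens M i f) g) a b h).
  r22 (Pnat PM i i _ _ (idm i) (assoc M i f g) a b h).
  r22 (GFmap_spec E (tens M f g) a b h i). r22 (GuC_spec E f g a i).
  reflexivity.
Defined.

Lemma tensm_cmp_idl {I : Cat} (M : Monoidal I) a b b' b'' (v : hom b b') (v' : hom b' b'') :
  tensm M (idm a) v' ∘ tensm M (idm a) v = tensm M (idm a) (v' ∘ v).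
Proof. rewrite <- tensm_cmp, cmp_id_l. reflexivity. Qed.
Lemma tensm_cmp_idr {I : Cat} (M : Monoidal I) a a' a'' b (u : hom a a') (u' : hom a' a'') :
  tensm M u' (idm b) ∘ tensm M u (idm b) = tensm M (u' ∘ u) (idm b).
Proof. rewrite <- tensm_cmp, cmp_id_l. reflexivity. Qed.

Lemma cancel_r {I : Cat} (M : Monoidal I) x y (f : hom x y) :
  f = runit M y ∘ tensm M f (idm (munit M)) ∘ runit_inv M x.
Proof. rewrite runit_nat, <- cmp_assoc, runit_iso2, cmp_id_r. reflexivity. Qed.

Lemma kelly {I : Cat} (M : Monoidal I) a b :
  runit M (tens M a b) = tensm M (idm a) (runit M b) ∘ assoc M a b (munit M).
Proof.
  assert (HB : assoc M a b (munit M) ∘ tensm M (runit M (tens M a b)) (idm (munit M))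
             = assoc M a b (munit M) ∘ tensm M (tensm M (idm a) (runit M b) ∘ assoc M a b (munit M)) (idm (munit M))).
  { rewrite <- (triangle M (tens M a b) (munit M)).
    rewrite cmp_assoc. rewrite <- (tensm_id M a b).
    rewrite (assoc_nat M (idm a) (idm b) (lunit M (munit M))).
    rewrite <- cmp_assoc, pentagon. normg.
    r21 (tensm_cmp_idl M a _ _ _ (assoc M b (munit M) (munit M)) (tensm M (idm b) (lunit M (munit M)))).
    rewrite triangle.
    r22 (eq_sym (assoc_nat M (idm a) (runit M b) (idm (munit M)))).
    rewrite <- tensm_cmp_idr. normg. reflexivity. }
  apply (f_equal (fun t => assoc_inv M a b (munit M) ∘ t)) in HB.
  rewrite !cmp_assoc, assoc_iso1, !cmp_id_l in HB.
  rewrite (cancel_r M _ _ (runit M (tens M a b))) at 1.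
  rewrite HB. rewrite <- cancel_r. reflexivity.
Qed.

Lemma coh_unit_l {I : Cat} (M : Monoidal I) i f :
  tensm M (idm i) (lunit M f) ∘ (assoc M i (munit M) f ∘ tensm M (runit_inv M i) (idm f)) = idm _.
Proof.
  rewrite cmp_assoc, triangle, tensm_cmp_idr, runit_iso2, tensm_id. reflexivity.
Qed.
Lemma coh_unit_r {I : Cat} (M : Monoidal I) i f :
  tensm M (idm i) (runit M f) ∘ (assoc M i f (munit M) ∘ runit_inv M (tens M i f)) = idm _.
Proof. rewrite cmp_assoc, <- kelly, runit_iso2. reflexivity. Qed.

Ltac cbnE := cbn [fobj fmap GF FComp IdF cmpt Gm Ge Gu hcomp].

Lemma L_Gmap_id {I C : Cat} {M : Monoidal I} {PM : ParamMonad I C} (E : EndData M PM) f X :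
  Gm E f f (idm f) X = idm _.
Proof.
  apply eext. intro i. cbnE. r22 (GmC_spec E f f (idm f) X i).
  rewrite tensm_id, Pmap_II, cmp_id_l, cmp_id_r. reflexivity.
Qed.

Lemma L_Gmap_cmp {I C : Cat} {M : Monoidal I} {PM : ParamMonad I C} (E : EndData M PM)
  f f' f'' (u : hom f f') (u' : hom f' f'') X :
  Gm E f f'' (u' ∘ u) X = Gm E f' f'' u' X ∘ Gm E f f' u X.
Proof.
  apply eext. intro i. cbnE. r22 (GmC_spec E f f'' (u' ∘ u) X i).
  r22 (GmC_spec E f' f'' u' X i). r22 (GmC_spec E f f' u X i).
  r21 (Pmap_vv PM i _ _ _ (tensm M (idm i) u) (tensm M (idm i) u') X).
  rewrite tensm_cmp_idl. reflexivity.
Qed.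

Lemma L_gunit_l {I C : Cat} {M : Monoidal I} {PM : ParamMonad I C} (E : EndData M PM) f X :
  Gm E _ _ (lunit M f) X ∘ Gu E (munit M) f X ∘ Ge E (GF E f X) = idm _.
Proof.
  apply eext. intro i. cbnE. rewrite cmp_id_r. normg.
  r22 (GmC_spec E _ _ (lunit M f) X i).
  r22 (GuC_spec E (munit M) f X i).
  r22 (GeC_spec E (Eob E f X) i).
  r22 (eq_sym (Pnat PM i i i (tens M i (munit M)) (idm i) (runit_inv M i) (Eob E f X) _
                 (Epi E f X (tens M i (munit M))))).
  r22 (eq_sym (muP_dinat PM i (tens M (tens M i (munit M)) f) (runit_inv M i) X)).
  r22 (eq_sym (etaP_natX PM i _ _ (Epi E f X (tens M i (munit M))))).
  r22 (eq_sym (etaP_natX PM i _ _ (Pmap PM (runit_inv M i) (idm (tens M (tens M i (munit M)) f)) X))).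
  r21 (muP_unit_l PM i (tens M (tens M i (munit M)) f) X). rewrite cmp_id_l.
  r22 (eq_sym (Epi_wedge E f X i (tens M i (munit M)) (runit_inv M i))).
  r21 (Pmap_vv PM i _ _ _ (tensm M (runit_inv M i) (idm f)) (assoc M i (munit M) f) X).
  r21 (Pmap_vv PM i _ _ _ (assoc M i (munit M) f ∘ tensm M (runit_inv M i) (idm f)) (tensm M (idm i) (lunit M f)) X).
  rewrite coh_unit_l, Pmap_II, cmp_id_l. reflexivity.
Qed.

Lemma L_gunit_r {I C : Cat} {M : Monoidal I} {PM : ParamMonad I C} (E : EndData M PM) f X :
  Gm E _ _ (runit M f) X ∘ Gu E f (munit M) X ∘ fmap (GF E f) (Ge E X) = idm _.
Proof.
  apply eext. intro i. cbnE. rewrite cmp_id_r. normg.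
  r22 (GmC_spec E _ _ (runit M f) X i).
  r22 (GuC_spec E f (munit M) X i).
  r22 (GFmap_spec E f X (Eob E (munit M) X) (GeC E X) i).
  r21 (fmapC (P PM i (tens M i f)) _ _ _ (GeC E X) (Epi E (munit M) X (tens M i f))).
  rewrite (GeC_spec E X (tens M i f)).
  rewrite (fmap_cmp (P PM i (tens M i f))). normg.
  r22 (muP_natr PM i (tens M i f) _ _ (runit_inv M (tens M i f)) X).
  r21 (muP_unit_r PM i (tens M i f) X). rewrite cmp_id_l.
  r21 (Pmap_vv PM i _ _ _ (runit_inv M (tens M i f)) (assoc M i f (munit M)) X).
  r21 (Pmap_vv PM i _ _ _ (assoc M i f (munit M) ∘ runit_inv M (tens M i f)) (tensm M (idm i) (runit M f)) X).
  rewrite coh_unit_r, Pmap_II, cmp_id_l. reflexivity.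
Qed.

Lemma L_gmu_nat {I C : Cat} {M : Monoidal I} {PM : ParamMonad I C} (E : EndData M PM)
  f f' g g' (u : hom f f') (v : hom g g') X :
  Gu E f' g' X ∘ hcomp (Gm E f f' u) (Gm E g g' v) X = Gm E _ _ (tensm M u v) X ∘ Gu E f g X.
Proof.
  apply eext. intro i. unfold hcomp. cbnE. normg.
  r22 (GuC_spec E f' g' X i).
  r22 (GmC_spec E f f' u (Eob E g' X) i).
  r22 (GFmap_spec E f (Eob E g X) (Eob E g' X) (GmC E g g' v X) i).
  r22 (eq_sym (Pnat PM i i (tens M i f) (tens M i f') (idm i) (tensm M (idm i) u) (Eob E g' X) _
                 (Epi E g' X (tens M i f')))).
  r22 (eq_sym (muP_dinat PM i (tens M (tens M i f') g') (tensm M (idm i) u) X)).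
  r21 (fmapC (P PM i (tens M i f)) _ _ _ (Epi E g' X (tens M i f'))
          (Pmap PM (tensm M (idm i) u) (idm (tens M (tens M i f') g')) X)).
  r21 (fmapC (P PM i (tens M i f)) _ _ _ (GmC E g g' v X)
          (Pmap PM (tensm M (idm i) u) (idm (tens M (tens M i f') g')) X ∘ Epi E g' X (tens M i f'))).
  r22 (GmC_spec E g g' v X (tens M i f')).
  r22 (eq_sym (Pmap_comm PM (tens M i f') (tens M i f) _ _ (tensm M (idm i) u)
                 (tensm M (idm (tens M i f')) v) X)).
  r22 (eq_sym (Epi_wedge E g X (tens M i f) (tens M i f') (tensm M (idm i) u))).
  r21 (Pmap_vv PM (tens M i f) _ _ _ (tensm M (tensm M (idm i) u) (idm g)) (tensm M (idm (tens M i f')) v) X).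
  rewrite <- tensm_cmp, cmp_id_l, cmp_id_r.
  rewrite (fmap_cmp (P PM i (tens M i f))). normg.
  r22 (muP_natr PM i (tens M i f) _ _ (tensm M (tensm M (idm i) u) v) X).
  r21 (Pmap_vv PM i _ _ _ (tensm M (tensm M (idm i) u) v) (assoc M i f' g') X).
  rewrite <- assoc_nat2.
  r12 (Pmap_vv PM i _ _ _ (assoc M i f g) (tensm M (idm i) (tensm M u v)) X).
  r22 (GmC_spec E _ _ (tensm M u v) X i).
  r22 (GuC_spec E f g X i).
  reflexivity.
Qed.

Lemma L_gassoc {I C : Cat} {M : Monoidal I} {PM : ParamMonad I C} (E : EndData M PM) f g h X :
  Gm E _ _ (assoc M f g h) X ∘ Gu E (tens M f g) h X ∘ Gu E f g (GF E h X)
  = Gu E f (tens M g h) X ∘ fmap (GF E f) (Gu E g h X).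
Proof.
  apply eext. intro i. cbnE. normg.
  r22 (GmC_spec E _ _ (assoc M f g h) X i).
  r22 (GuC_spec E (tens M f g) h X i).
  r22 (GuC_spec E f g (Eob E h X) i).
  r22 (eq_sym (Pnat PM i i (tens M (tens M i f) g) (tens M i (tens M f g)) (idm i) (assoc M i f g)
                 (Eob E h X) _ (Epi E h X (tens M i (tens M f g))))).
  r22 (eq_sym (muP_dinat PM i (tens M (tens M i (tens M f g)) h) (assoc M i f g) X)).
  r21 (fmapC (P PM i (tens M (tens M i f) g)) _ _ _ (Epi E h X (tens M i (tens M f g)))
         (Pmap PM (assoc M i f g) (idm (tens M (tens M i (tens M f g)) h)) X)).
  r22 (eq_sym (Epi_wedge E h X (tens M (tens M i f) g) (tens M i (tens M f g)) (assoc M i f g))).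
  rewrite (fmap_cmp (P PM i (tens M (tens M i f) g))). normg.
  r22 (muP_natr PM i (tens M (tens M i f) g) _ _ (tensm M (assoc M i f g) (idm h)) X).
  r22 (eq_sym (muP_natX PM i (tens M i f) (tens M (tens M i f) g) (Eob E h X) _
                 (Epi E h X (tens M (tens M i f) g)))).
  r22 (muP_assoc PM i (tens M i f) (tens M (tens M i f) g) (tens M (tens M (tens M i f) g) h) X).
  r21 (Pmap_vv PM i _ _ _ (tensm M (assoc M i f g) (idm h)) (assoc M i (tens M f g) h) X).
  r21 (Pmap_vv PM i _ _ _ (assoc M i (tens M f g) h ∘ tensm M (assoc M i f g) (idm h))
         (tensm M (idm i) (assoc M f g h)) X).
  r22 (GuC_spec E f (tens M g h) X i).
  r22 (GFmap_spec E f _ _ (GuC E g h X) i).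
  r21 (fmapC (P PM i (tens M i f)) _ _ _ (GuC E g h X) (Epi E (tens M g h) X (tens M i f))).
  r22 (GuC_spec E g h X (tens M i f)).
  rewrite (fmap_cmp (P PM i (tens M i f))). normg.
  r22 (muP_natr PM i (tens M i f) _ _ (assoc M (tens M i f) g h) X).
  r21 (Pmap_vv PM i _ _ _ (assoc M (tens M i f) g h) (assoc M i f (tens M g h)) X).
  rewrite pentagon. normg.
  rewrite !(fmap_cmp (P PM i (tens M i f))). normg.
  reflexivity.
Qed.

Definition GMof {I C : Cat} {M : Monoidal I} {PM : ParamMonad I C} (E : EndData M PM)
  : GradedMonad M C :=
  {| G := GF E; Gmap := Gm E; Gmap_id := L_Gmap_id E; Gmap_cmp := L_Gmap_cmp E;
     geta := Ge E; gmu := Gu E; gmu_nat := L_gmu_nat E;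
     gunit_l := L_gunit_l E; gunit_r := L_gunit_r E; gassoc := L_gassoc E |}.

Theorem proposition40 (I C : Cat) (M : Monoidal I) (HC : finitely_complete C)
  (PM : ParamMonad I C)
  (Hends : forall (f : I) (X : C),
      exists (W : C) (pi : forall i, hom W (integrand_ob M PM f X i i)),
        is_end (integrand_map M PM f X) W pi) :
  exists (GM : GradedMonad M C)
         (pi : forall (f : I) (X : C) (i : I),
                 hom (G GM f X) (P PM i (tens M i f) X)),
    (* G f X is the end \int_i P(i, i . f) X, with projections pi *)
    (forall f X, is_end (integrand_map M PM f X) (G GM f X) (pi f X)) /\
    (* the functor G f on C is the one induced on the ends *)
    (forall f X Y (h : hom X Y) i,
        pi f Y i ∘ fmap (G GM f) h = fmap (P PM i (tens M i f)) h ∘ pi f X i) /\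
    (* the action of G on grades is induced by P(i, i . u) *)
    (forall f f' (u : hom f f') X i,
        pi f' X i ∘ Gmap GM u X = Pmap PM (idm i) (tensm M (idm i) u) X ∘ pi f X i) /\
    (* the unit is induced by eta^P_i : Id -> P(i,i) -> P(i, i . e) *)
    (forall X i,
        pi (munit M) X i ∘ geta GM X
        = Pmap PM (idm i) (runit_inv M i) X ∘ etaP PM i X) /\
    (* the multiplication is induced by mu^P_{i, i.f, (i.f).g} *)
    (forall f g X i,
        pi (tens M f g) X i ∘ gmu GM f g X
        = Pmap PM (idm i) (assoc M i f g) X
          ∘ muP PM i (tens M i f) (tens M (tens M i f) g) X
          ∘ fmap (P PM i (tens M i f)) (pi g X (tens M i f))
          ∘ pi f (G GM g X) i).
Proof.
  set (E := get_ED I C M PM Hends).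
  exists (GMof E). exists (Epi E).
  split; [| split; [| split; [| split]]].
  - intros f X. exact (Eend E f X).
  - intros f X Y h i. exact (GF_spec E f X Y h i).
  - intros f f' u X i. exact (Gm_spec E f f' u X i).
  - intros X i. exact (Ge_spec E X i).
  - intros f g X i. exact (GuC_spec E f g X i).
Qed.
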